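(* Consider the theory of equality with uninterpreted functions (EUF). Let $G$ be a finite set of EUF predicates and $m := |\mathit{terms}(G)|$. Then $D_T(G) \le 3m$; that is, for every subset $G' \subseteq G$ and every integer $N \ge 3m$, the saturation procedure $\mathrm{Sat}_N(G')$ returns UNSATISFIABLE if and only if $G'$ is unsatisfiable in EUF.
   Context: EUF terms are variables or applications $f(t_1,\dots,t_n)$ of uninterpreted function symbols to terms; EUF predicates are $t_1 = t_2$ or $t_1 \neq t_2$ for terms $t_1,t_2$. $\mathit{terms}(\phi)$ is the set of syntactically distinct subterms occurring in $\phi$ (e.g. $\mathit{terms}(f(h(x))) = \{x, h(x), f(h(x))\}$), and $\mathit{terms}(G)$ is the union over $g\in G$. The inference rules are: from $X=Y$ derive $Y=X$; from $X=Y$ and $Y=Z$ derive $X=Z$; from $X=Y$ and $X\neq Y$ derive $\bot$; from $X_1=Y_1,\dots,X_n=Y_n$ derive $f(X_1,\dots,X_n)=f(Y_1,\dots,Y_n)$. When run on an input set $H$, only equalities between terms in $\mathit{terms}(H)$ are derived. Saturation procedure $\mathrm{Sat}_N(H)$: (1) $W := H$. (2) Repeat $N$ times: $W' := W$; for every predicate $g\notin W'$ derivable in one rule application from predicates all in $W'$, add $g$ to $W$. (3) Return UNSATISFIABLE if $\bot$ is derivable in one rule application from predicates in $W$, else SATISFIABLE. $D_T(G)$ denotes the maximum over $G'\subseteq G$ of the least number $d$ such that $\mathrm{Sat}_N(G')$ correctly decides satisfiability of $G'$ for all $N\ge d$.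
   Formalization: The inference rules of $\mathrm{Sat}_N$ also derive $x=x$ for every variable $x$ in $\mathit{terms}(H)$, so variables count as nullary function symbols under the congruence rule. The statement above fails without it. *)

(* Defs.v *)
From Stdlib Require Import List Arith Lia.
Import ListNotations.

(* Symbols are identified by
   their name together with their arity (the length of the argument list). *)
Inductive term : Type :=
| Var : nat -> term
| App : nat -> list term -> term.

Inductive pred : Type :=
| PEq  : term -> term -> pred
| PNeq : term -> term -> pred.

Definition predset := pred -> Prop.

Inductive subterm : term -> term -> Prop :=
| subterm_refl : forall t, subterm t t
| subterm_arg : forall s a f args, In a args -> subterm s a -> subterm s (App f args).

Definition sides (g : pred) : term * term :=
  match g with PEq a b => (a, b) | PNeq a b => (a, b) end.

Definition terms (H : predset) (t : term) : Prop :=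
  exists g, H g /\ (subterm t (fst (sides g)) \/ subterm t (snd (sides g))).

Definition card_terms (H : predset) (m : nat) : Prop :=
  exists l : list term, NoDup l /\ (forall t, In t l <-> terms H t) /\ length l = m.

Inductive step (T : term -> Prop) (W : predset) : pred -> Prop :=
| step_sym : forall x y, T x -> T y -> W (PEq x y) -> step T W (PEq y x)
| step_trans : forall x y z, T x -> T z -> W (PEq x y) -> W (PEq y z) -> step T W (PEq x z)
| step_cong : forall f xs ys, T (App f xs) -> T (App f ys) ->
    Forall2 (fun x y => W (PEq x y)) xs ys -> step T W (PEq (App f xs) (App f ys))
(* variables viewed as nullary symbols: congruence with n = 0 *)
| step_cong_var : forall x, T (Var x) -> step T W (PEq (Var x) (Var x)).

Definition bot_derivable (W : predset) : Prop :=
  exists x y, W (PEq x y) /\ W (PNeq x y).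

(* W after k rounds of step (2) of Sat_N(H) *)
Fixpoint satW (H : predset) (k : nat) : predset :=
  match k with
  | O => H
  | S k' => fun g => satW H k' g \/ step (terms H) (satW H k') g
  end.

Definition Sat_unsat (N : nat) (H : predset) : Prop := bot_derivable (satW H N).

(* EUF semantics: a domain D, values of variables, and for each symbol name an
   interpretation on argument lists (so each (name, arity) gets a function D^n -> D). *)
Fixpoint eval {D : Type} (v : nat -> D) (fn : nat -> list D -> D) (t : term) : D :=
  match t with
  | Var x => v x
  | App f args => fn f (map (eval v fn) args)
  end.

Definition holds {D : Type} (v : nat -> D) (fn : nat -> list D -> D) (g : pred) : Prop :=
  match g with
  | PEq a b => eval v fn a = eval v fn b
  | PNeq a b => eval v fn a <> eval v fn b
  end.

Definition satisfiable (H : predset) : Prop :=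
  exists (D : Type) (v : nat -> D) (fn : nat -> list D -> D), forall g, H g -> holds v fn g.

(* Main.v *)
Require Import Defs.
From Stdlib Require Import List Arith Lia Permutation Classical ClassicalEpsilon FunctionalExtensionality PropExtensionality.
Import ListNotations.


Fixpoint term_ind' (P : term -> Prop) (Hv : forall n, P (Var n))
  (Ha : forall f l, Forall P l -> P (App f l)) (t : term) : P t :=
  match t with
  | Var n => Hv n
  | App f l => Ha f l ((fix go (l : list term) : Forall P l :=
       match l with [] => Forall_nil _ | x :: r => Forall_cons _ (term_ind' P Hv Ha x) (go r) end) l)
  end.

Lemma satW_mono : forall H k k' g, satW H k g -> k <= k' -> satW H k' g.
Proof.
  intros H k k' g Hg Hle. induction Hle; auto. simpl. left; auto.
Qed.

Lemma subterm_app_arg : forall s t, subterm s t -> forall f xs x, s = App f xs -> In x xs -> subterm x t.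
Proof.
  intros s t Hs. induction Hs; intros f0 xs0 x0 E Hin.
  - subst. eapply subterm_arg; eauto. constructor.
  - eapply subterm_arg; eauto.
Qed.

Lemma terms_arg : forall H f xs x, terms H (App f xs) -> In x xs -> terms H x.
Proof.
  intros H f xs x [g [Hg Hs]] Hin. exists g. split; auto.
  destruct Hs as [Hs|Hs]; [left|right]; eapply subterm_app_arg; eauto.
Qed.

Lemma terms_eq_l : forall (H : predset) u v, H (PEq u v) -> terms H u.
Proof. intros. exists (PEq u v). split; auto. left. constructor. Qed.
Lemma terms_eq_r : forall (H : predset) u v, H (PEq u v) -> terms H v.
Proof. intros. exists (PEq u v). split; auto. right. constructor. Qed.
Lemma terms_neq_l : forall (H : predset) u v, H (PNeq u v) -> terms H u.
Proof. intros. exists (PNeq u v). split; auto. left. constructor. Qed.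
Lemma terms_neq_r : forall (H : predset) u v, H (PNeq u v) -> terms H v.
Proof. intros. exists (PNeq u v). split; auto. right. constructor. Qed.

Lemma Forall2_map_eq : forall {A B} (F : A -> B) (xs ys : list A),
  Forall2 (fun x y => F x = F y) xs ys -> map F xs = map F ys.
Proof. intros A B F xs ys H. induction H; simpl; congruence. Qed.

Lemma sound : forall (H : predset) (D : Type) (v : nat -> D) (fn : nat -> list D -> D),
  (forall g, H g -> holds v fn g) -> forall k g, satW H k g -> holds v fn g.
Proof.
  intros H D v fn HH k. induction k; intros g Hg; simpl in Hg; auto.
  destruct Hg as [Hg|Hg]; auto.
  destruct Hg; simpl.
  - specialize (IHk _ H2). simpl in IHk. auto.
  - pose proof (IHk _ H2). pose proof (IHk _ H3). simpl in *. congruence.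
  - f_equal. apply Forall2_map_eq. eapply Forall2_impl; [|exact H2].
    intros a b Hab. exact (IHk _ Hab).
  - reflexivity.
Qed.

Lemma soundness_dir : forall (H : predset) N, Sat_unsat N H -> ~ satisfiable H.
Proof.
  intros H N [x [y [H1 H2]]] [D [v [fn Hs]]].
  pose proof (sound H D v fn Hs N _ H1). pose proof (sound H D v fn Hs N _ H2).
  simpl in *. auto.
Qed.

Definition w (K : list term) : nat := match K with [_] => 1 | _ => 3 * length K - 3 end.
Definition dflag (K : list term) : nat := match K with [_] => 0 | _ => 1 end.
Fixpoint L (P : list (list term)) : nat := match P with [] => 0 | K :: P' => w K + L P' end.
Definition samecomp (P : list (list term)) a b := exists K, In K P /\ In a K /\ In b K.

Record Inv (H : predset) (P : list (list term)) : Prop := {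
  inv_nodup : NoDup (concat P);
  inv_T : forall t, In t (concat P) -> terms H t;
  inv_der : forall a b, samecomp P a b -> satW H (L P) (PEq a b) }.

Lemma w_app : forall A B, A <> [] -> B <> [] -> w (A ++ B) = w A + w B + 1 + dflag A + dflag B.
Proof.
  intros A B HA HB.
  destruct A as [|x [|y r]]; [congruence| |];
  destruct B as [|x' [|y' r']]; try congruence; simpl; rewrite ?length_app; simpl; lia.
Qed.

Lemma w_le : forall K, w K <= 3 * length K.
Proof. intros [|x [|y r]]; simpl; lia. Qed.

Lemma L_le : forall P, L P <= 3 * length (concat P).
Proof. induction P; simpl; auto. rewrite length_app. pose proof (w_le a). lia. Qed.

Lemma dflag_two : forall A a u, In a A -> In u A -> a <> u -> dflag A = 1.
Proof.
  intros [|x [|y r]] a u Ha Hu Hne; simpl in *; try tauto.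
  destruct Ha as [<-|[]]; destruct Hu as [<-|[]]; congruence.
Qed.

Lemma concat_perm : forall (P Q : list (list term)), Permutation P Q -> Permutation (concat P) (concat Q).
Proof.
  intros P Q Hp. induction Hp; simpl; auto.
  - apply Permutation_app_head; auto.
  - apply Permutation_app_swap_app.
  - eapply perm_trans; eauto.
Qed.

Lemma L_perm : forall P Q, Permutation P Q -> L P = L Q.
Proof. intros P Q Hp. induction Hp; simpl; lia. Qed.

Lemma Inv_perm : forall H P Q, Permutation P Q -> Inv H P -> Inv H Q.
Proof.
  intros H P Q Hp [Hn HT Hd]. pose proof (concat_perm _ _ Hp) as Hc. constructor.
  - eapply Permutation_NoDup; eauto.
  - intros t Ht. apply HT. eapply Permutation_in; [apply Permutation_sym; exact Hc|exact Ht].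
  - intros a b [K [HK [Ha Hb]]]. rewrite <- (L_perm _ _ Hp). apply Hd.
    exists K. split; auto. eapply Permutation_in; [apply Permutation_sym; exact Hp|exact HK].
Qed.

Lemma nodup_app_disj : forall (l1 l2 : list term) x, NoDup (l1 ++ l2) -> In x l1 -> In x l2 -> False.
Proof.
  induction l1; simpl; intros l2 x Hn H1 H2; auto.
  inversion Hn; subst. destruct H1 as [<-|H1].
  - apply H3. apply in_or_app. right; auto.
  - eapply IHl1; eauto.
Qed.

Lemma comp_unique : forall (P : list (list term)) K K' b, NoDup (concat P) -> In K P -> In K' P -> In b K -> In b K' -> K = K'.
Proof.
  induction P; simpl; intros K K' b Hn HK HK' Hb Hb'; [tauto|].
  destruct HK as [<-|HK]; destruct HK' as [<-|HK']; auto.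
  - exfalso. eapply nodup_app_disj; eauto. apply in_concat. eauto.
  - exfalso. eapply nodup_app_disj; eauto. apply in_concat. eauto.
  - eapply IHP; eauto. eapply NoDup_app_remove_l; eauto.
Qed.

Lemma samecomp_sym : forall P a b, samecomp P a b -> samecomp P b a.
Proof. intros P a b [K [? [? ?]]]. exists K; auto. Qed.

Lemma samecomp_trans : forall (P : list (list term)) a b c, NoDup (concat P) -> samecomp P a b -> samecomp P b c -> samecomp P a c.
Proof.
  intros P a b c Hn [K [HK [Ha Hb]]] [K' [HK' [Hb' Hc]]].
  assert (K = K') by (eapply comp_unique; eauto). subst. exists K'; auto.
Qed.

Lemma samecomp_refl : forall (P : list (list term)) t, In t (concat P) -> samecomp P t t.
Proof. intros P t Ht. apply in_concat in Ht. destruct Ht as [K [HK Ht]]. exists K; auto. Qed.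

Definition birthable (P : list (list term)) (t : term) : Prop :=
  (exists x, t = Var x) \/ (exists f xs, t = App f xs /\ forall x, In x xs -> In x (concat P)).

Lemma Forall2_refl_in : forall (R : term -> term -> Prop) xs, (forall x, In x xs -> R x x) -> Forall2 R xs xs.
Proof. induction xs; simpl; intros; constructor; auto. Qed.

Lemma birth : forall H P t, Inv H P -> terms H t -> ~ In t (concat P) -> birthable P t -> Inv H ([t] :: P).
Proof.
  intros H P t [Hn HT Hd] Ht Hnin Hb. constructor.
  - simpl. constructor; auto.
  - simpl. intros s [<-|Hs]; auto.
  - intros a b [K [HK [Ha Hb']]]. simpl in HK. simpl L. destruct HK as [<-|HK].
    + simpl in Ha, Hb'. destruct Ha as [<-|[]]. destruct Hb' as [<-|[]].
      simpl. right. destruct Hb as [[x ->]|[f [xs [-> Hxs]]]].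
      * apply step_cong_var. auto.
      * apply step_cong; auto. apply Forall2_refl_in. intros x Hx.
        apply Hd. apply samecomp_refl; auto.
    + eapply satW_mono. apply Hd. exists K; auto. lia.
Qed.

Lemma trans1 : forall H k x y z, terms H x -> terms H z -> satW H k (PEq x y) -> satW H k (PEq y z) -> satW H (S k) (PEq x z).
Proof. intros. simpl. right. eapply step_trans; eauto. Qed.
Lemma link : forall H k a u v b dA dB n,
  terms H a -> terms H v -> terms H b ->
  satW H (S k) (PEq u v) ->
  (a = u \/ (dA = 1 /\ satW H k (PEq a u))) ->
  (b = v \/ (dB = 1 /\ satW H k (PEq v b))) ->
  S k + dA + dB <= n -> satW H n (PEq a b).
Proof.
  intros H k a u v b dA dB n Ta Tv Tb Huv Ha Hb Hle.
  assert (Hav : satW H (S k + dA) (PEq a v)).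
  { destruct Ha as [->|[-> Hau]].
    - eapply satW_mono; eauto. lia.
    - replace (S k + 1) with (S (S k)) by lia. simpl. right.
      apply step_trans with u; auto. }
  destruct Hb as [->|[-> Hvb]].
  - eapply satW_mono; eauto. lia.
  - eapply satW_mono with (S (S k + dA)); [|lia].
    apply trans1 with v; auto. eapply satW_mono; eauto. lia.
Qed.

Lemma merge : forall H A B R u v, Inv H (A :: B :: R) -> In u A -> In v B ->
  satW H (S (L (A :: B :: R))) (PEq u v) -> satW H (S (L (A :: B :: R))) (PEq v u) ->
  Inv H ((A ++ B) :: R) /\ L (A :: B :: R) < L ((A ++ B) :: R).
Proof.
  intros H A B R u v [Hn HT Hd] Hu Hv Huv Hvu.
  assert (HA : A <> []) by (intro; subst; inversion Hu).
  assert (HB : B <> []) by (intro; subst; inversion Hv).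
  assert (HL : L ((A ++ B) :: R) = S (L (A :: B :: R)) + dflag A + dflag B).
  { simpl. rewrite w_app; auto. lia. }
  split; [|lia].
  assert (TA : forall a, In a A -> terms H a) by (intros; apply HT; simpl; apply in_or_app; auto).
  assert (TB : forall a, In a B -> terms H a) by (intros; apply HT; simpl; apply in_or_app; right; apply in_or_app; auto).
  assert (SA : forall a b, In a A -> In b A -> satW H (L (A :: B :: R)) (PEq a b)) by (intros; apply Hd; exists A; simpl; auto).
  assert (SB : forall a b, In a B -> In b B -> satW H (L (A :: B :: R)) (PEq a b)) by (intros; apply Hd; exists B; simpl; auto).
  constructor.
  - simpl. simpl in Hn. rewrite <- app_assoc. auto.
  - intros t Ht. apply HT. simpl in *. rewrite <- app_assoc in Ht. auto.
  - intros a b [K [HK [Ha Hb]]]. rewrite HL. simpl in HK. destruct HK as [<-|HK].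
    + apply in_app_or in Ha. apply in_app_or in Hb.
      destruct Ha as [Ha|Ha]; destruct Hb as [Hb|Hb].
      * eapply satW_mono; [apply SA; auto|lia].
      * eapply link with (u := u) (v := v) (dA := dflag A) (dB := dflag B); auto.
        -- exact Huv.
        -- destruct (classic (a = u)); [left; auto|right; split; [apply (dflag_two A a u); auto|auto]].
        -- destruct (classic (b = v)); [left; auto|right; split; [apply (dflag_two B b v); auto|auto]].
      * eapply link with (u := v) (v := u) (dA := dflag B) (dB := dflag A); auto; try lia.
        -- exact Hvu.
        -- destruct (classic (a = v)); [left; auto|right; split; [apply (dflag_two B a v); auto|auto]].
        -- destruct (classic (b = u)); [left; auto|right; split; [apply (dflag_two A b u); auto|auto]].
        -- lia.
      * eapply satW_mono; [apply SB; auto|lia].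
    + eapply satW_mono; [apply Hd; exists K; simpl; auto|lia].
Qed.

Definition edge (H : predset) P u v := H (PEq u v) \/ H (PEq v u) \/
  exists f xs ys, u = App f xs /\ v = App f ys /\ Forall2 (samecomp P) xs ys.

Lemma sym1 : forall H k x y, terms H x -> terms H y -> satW H k (PEq x y) -> satW H (S k) (PEq y x).
Proof. intros. simpl. right. apply step_sym; auto. Qed.

Lemma edge_der : forall H P u v, Inv H P -> terms H u -> terms H v -> edge H P u v ->
  satW H (S (L P)) (PEq u v) /\ satW H (S (L P)) (PEq v u).
Proof.
  intros H P u v HI Tu Tv [He|[He|[f [xs [ys [-> [-> Hf]]]]]]].
  - split; [apply satW_mono with 0; [exact He|lia]|]. apply sym1; auto. apply satW_mono with 0; [exact He|lia].
  - split; [|apply satW_mono with 0; [exact He|lia]]. apply sym1; auto. apply satW_mono with 0; [exact He|lia].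
  - split; simpl; right; apply step_cong; auto.
    + eapply Forall2_impl; [|exact Hf]. intros a b Hab. apply (inv_der _ _ HI); auto.
    + apply Forall2_flip. eapply Forall2_impl; [|exact Hf]. intros a b Hab. apply (inv_der _ _ HI); apply samecomp_sym; auto.
Qed.

Definition Closed (H : predset) P :=
  (forall t, terms H t -> In t (concat P)) /\
  (forall u v, H (PEq u v) -> samecomp P u v) /\
  (forall f xs ys, terms H (App f xs) -> terms H (App f ys) -> Forall2 (samecomp P) xs ys ->
     samecomp P (App f xs) (App f ys)).

Lemma decomp : forall (P : list (list term)) A B, In A P -> In B P -> A <> B -> exists R, Permutation P (A :: B :: R).
Proof.
  intros P A B HA HB Hne. apply in_split in HA. destruct HA as [l1 [l2 ->]].
  assert (HB' : In B (l1 ++ l2)).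
  { apply in_app_or in HB. apply in_or_app. destruct HB as [HB|[HB|HB]]; auto. congruence. }
  apply in_split in HB'. destruct HB' as [m1 [m2 Hm]]. exists (m1 ++ m2).
  eapply perm_trans; [apply Permutation_sym; apply Permutation_middle|]. apply perm_skip.
  rewrite Hm. apply Permutation_sym. apply Permutation_middle.
Qed.

Lemma progress : forall H P, Inv H P -> Closed H P \/ exists P', Inv H P' /\ L P < L P'.
Proof.
  intros H P HI.
  destruct (classic (exists t, terms H t /\ ~ In t (concat P) /\ birthable P t)) as [[t [Ht [Hn Hb]]]|Hnb].
  { right. exists ([t] :: P). split; [apply birth; auto|simpl; lia]. }
  assert (C1 : forall t, terms H t -> In t (concat P)).
  { intro t. induction t using term_ind'; intros Ht; apply NNPP; intro Hn; apply Hnb.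
    - exists (Var n). repeat split; auto. left. eauto.
    - exists (App f l). repeat split; auto. right. exists f, l. split; auto.
      intros x Hx. rewrite Forall_forall in H0. apply H0; auto. eapply terms_arg; eauto. }
  destruct (classic (exists u v, terms H u /\ terms H v /\ edge H P u v /\ ~ samecomp P u v)) as [[u [v [Tu [Tv [He Hns]]]]]|Hne].
  { right. destruct (edge_der H P u v HI Tu Tv He) as [Huv Hvu].
    pose proof (C1 u Tu) as Hu. pose proof (C1 v Tv) as Hv.
    apply in_concat in Hu. apply in_concat in Hv.
    destruct Hu as [A [HA Hu]]. destruct Hv as [B [HB Hv]].
    assert (A <> B) by (intro; subst; apply Hns; exists B; auto).
    destruct (decomp P A B HA HB H0) as [R HR].
    pose proof (L_perm _ _ HR) as HLe. rewrite HLe in Huv, Hvu.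
    destruct (merge H A B R u v (Inv_perm _ _ _ HR HI) Hu Hv Huv Hvu) as [HI' Hlt].
    exists ((A ++ B) :: R). split; auto. lia. }
  left. split; [exact C1|split].
  - intros u v Huv. apply NNPP. intro Hn. apply Hne. exists u, v.
    repeat split; [eapply terms_eq_l; eauto|eapply terms_eq_r; eauto|left; auto|auto].
  - intros f xs ys T1 T2 Hf. apply NNPP. intro Hn. apply Hne. exists (App f xs), (App f ys).
    repeat split; auto. right; right. exists f, xs, ys. auto.
Qed.

Lemma Inv_L_bound : forall H P (l : list term), Inv H P -> (forall t, terms H t -> In t l) -> L P <= 3 * length l.
Proof.
  intros H P l HI Hl. pose proof (L_le P).
  assert (length (concat P) <= length l).
  { apply NoDup_incl_length. apply (inv_nodup _ _ HI). intros t Ht. apply Hl. apply (inv_T _ _ HI); auto. }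
  lia.
Qed.

Lemma exists_closed : forall H (l : list term), (forall t, terms H t -> In t l) ->
  forall k P, Inv H P -> 3 * length l - L P <= k -> exists P', Inv H P' /\ Closed H P'.
Proof.
  intros H l Hl k. induction k; intros P HI Hk.
  - destruct (progress H P HI) as [Hc|[P' [HI' Hlt]]]; eauto.
    pose proof (Inv_L_bound H P' l HI' Hl). lia.
  - destruct (progress H P HI) as [Hc|[P' [HI' Hlt]]]; eauto.
    apply (IHk P' HI'). pose proof (Inv_L_bound H P' l HI' Hl). lia.
Qed.

Lemma model : forall H P, Inv H P -> Closed H P ->
  (forall a b, H (PNeq a b) -> ~ samecomp P a b) -> satisfiable H.
Proof.
  intros H P HI [C1 [C2 C3]] HN.
  pose proof (inv_nodup _ _ HI) as Hnd.
  set (cls := fun t => samecomp P t).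
  assert (cls_eq : forall a b, samecomp P a b -> cls a = cls b).
  { intros a b Hab. unfold cls. apply functional_extensionality. intro s.
    apply propositional_extensionality. split; intro Hs.
    - eapply samecomp_trans; eauto. apply samecomp_sym; auto.
    - eapply samecomp_trans; eauto. }
  assert (cls_inv : forall a b, In b (concat P) -> cls a = cls b -> samecomp P a b).
  { intros a b Hb E. assert (cls a b = cls b b) by (rewrite E; auto).
    unfold cls in H0. rewrite H0. apply samecomp_refl; auto. }
  set (fn := fun f ds => cls (App f (epsilon (inhabits []) (fun xs => terms H (App f xs) /\ map cls xs = ds)))).
  set (v := fun x => cls (Var x)).
  assert (Hev : forall t, terms H t -> eval v fn t = cls t).
  { intro t. induction t using term_ind'; intros Ht; simpl; auto.
    assert (Hm : map (eval v fn) l = map cls l).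
    { apply map_ext_in. intros x Hx. rewrite Forall_forall in H0. apply H0; auto. eapply terms_arg; eauto. }
    rewrite Hm. unfold fn.
    set (P0 := fun xs => terms H (App f xs) /\ map cls xs = map cls l).
    assert (Hex : exists xs, P0 xs) by (exists l; split; auto).
    destruct (epsilon_spec (inhabits []) P0 Hex) as [T0 Em].
    set (xs0 := epsilon (inhabits []) P0) in *.
    apply cls_eq. apply C3; auto.
    assert (Hb : forall y, In y l -> In y (concat P)) by (intros y Hy; apply C1; exact (terms_arg H f l y Ht Hy)).
    clearbody xs0. clear -Em Hb cls_inv. revert l Em Hb. induction xs0; intros [|y l] Em Hb; simpl in Em; try discriminate; constructor.
    - injection Em; intros. apply cls_inv; simpl in Hb; auto.
    - injection Em; intros. apply IHxs0; auto. intros; apply Hb; simpl; auto. }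
  exists (term -> Prop), v, fn. intros g Hg. destruct g as [a b|a b]; simpl.
  - rewrite !Hev; [apply cls_eq; apply C2; auto|eapply terms_eq_r; eauto|eapply terms_eq_l; eauto].
  - rewrite !Hev; [|eapply terms_neq_r; eauto|eapply terms_neq_l; eauto].
    intro E. apply (HN a b Hg). apply cls_inv; auto. apply C1. eapply terms_neq_r; eauto.
Qed.

Theorem proposition3p9 :
  forall (G : list pred) (m : nat),
    card_terms (fun g => In g G) m ->
    forall (G' : predset), (forall g, G' g -> In g G) ->
    forall N : nat, 3 * m <= N ->
      (Sat_unsat N G' <-> ~ satisfiable G').
Proof.
  intros G m [l [Hnd [Hl Hlen]]] G' HG' N HN. split.
  - apply soundness_dir.
  - intro Hns.
    assert (Hsub : forall t, terms G' t -> In t l).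
    { intros t [g [Hg Hs]]. apply Hl. exists g. auto. }
    assert (HI0 : Inv G' []).
    { constructor; simpl; auto. constructor. intros t []. intros a b [K [[] _]]. }
    destruct (exists_closed G' l Hsub _ [] HI0 (le_n _)) as [P [HI HC]].
    pose proof (Inv_L_bound G' P l HI Hsub) as HLb.
    destruct (classic (exists a b, G' (PNeq a b) /\ samecomp P a b)) as [[a [b [Hab Hs]]]|Hno].
    + exists a, b. split.
      * eapply satW_mono; [apply (inv_der _ _ HI); exact Hs|lia].
      * apply satW_mono with 0; [exact Hab|lia].
    + exfalso. apply Hns. apply (model G' P HI HC). intros a b Hab Hs. apply Hno. eauto.
Qed.
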